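(* Let $0\le\gamma_1<\dots<\gamma_p\le1$, $\boldsymbol\alpha=(\alpha_1,\dots,\alpha_p)\in(0,1)^p$ with $\sum_i\alpha_i=1$, and for each $i$ let $(\gamma_{i,n})_n$ be $[0,1]$-valued with $|\gamma_{i,n}-\gamma_i|=O(1/n)$. Let $\phi_{n,\boldsymbol\alpha,\boldsymbol\gamma_n}(u)=\sum_{i=1}^p\alpha_i\phi_{n,\gamma_{i,n}}(u)$. Then for every $i\in\{1,\dots,p\}$ there exists $\delta_i>0$ such that, whenever $\gamma_i-\delta_i<a<b<\gamma_i$ or $\gamma_i<b<a<\gamma_i+\delta_i$ (with $a,b\in(0,1)$), $\phi_{n,\boldsymbol\alpha,\boldsymbol\gamma_n}'(a)/\phi_{n,\boldsymbol\alpha,\boldsymbol\gamma_n}'(b)\to0$ as $n\to\infty$.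
   Context: $[x]$ is the integer part. $\phi_{n,\alpha}(t)=\sum_{j=1+[(n-1)\alpha]}^n\binom{n}{j}t^j(1-t)^{n-j}$, $t\in[0,1]$. *)

(* Defs.v *)
From Stdlib Require Import Reals ZArith Arith.
From Coquelicot Require Import Coquelicot.
Open Scope R_scope.

Definition phi_lo (n : nat) (alpha : R) : nat :=
  Z.to_nat (1 + Int_part ((INR n - 1) * alpha))%Z.

Definition phi (n : nat) (alpha : R) (t : R) : R :=
  sum_f_R0 (fun j => if Nat.leb (phi_lo n alpha) j
                     then Binomial.C n j * t ^ j * (1 - t) ^ (n - j)
                     else 0) n.

(* Mixture phi_{n, alpha, gamma_n}(u) = sum_{i<p} alpha_i phi_{n, gamma_{i,n}}(u)
   (indices 0..p-1 instead of 1..p). *)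
Definition phi_mix (p : nat) (alpha : nat -> R) (gn : nat -> nat -> R)
  (n : nat) (u : R) : R :=
  sum_f_R0 (fun i => alpha i * phi n (gn i n) u) (p - 1).

(* Main.v *)
Require Import Defs.
From Stdlib Require Import Reals ZArith Arith Lra Lia.
From Coquelicot Require Import Coquelicot.
Open Scope R_scope.

Definition TT (m c : nat) (t : R) := Binomial.C m c * t^c * (1-t)^(m-c).
Definition bb (m j : nat) (t:R) :=
  match j with O => 0 | S c => if Nat.leb c m then TT m c t else 0 end.

Lemma C_id1 m j : (j <= m)%nat -> INR (S j) * Binomial.C (S m) (S j) = INR (S m) * Binomial.C m j.
Proof.
intros H. unfold Binomial.C. replace (S m - S j)%nat with (m - j)%nat by lia.
rewrite !fact_simpl, !mult_INR.
pose proof (INR_fact_neq_0 m). pose proof (INR_fact_neq_0 j).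
pose proof (INR_fact_neq_0 (m-j)). pose proof (pos_INR j).
field. repeat split; auto. rewrite S_INR; lra.
Qed.

Lemma C_id2 m j : (j <= m)%nat -> INR (S m - j) * Binomial.C (S m) j = INR (S m) * Binomial.C m j.
Proof.
intros H. unfold Binomial.C. replace (S m - j)%nat with (S (m - j))%nat by lia.
rewrite !fact_simpl, !mult_INR.
pose proof (INR_fact_neq_0 m). pose proof (INR_fact_neq_0 j).
pose proof (INR_fact_neq_0 (m-j)). pose proof (pos_INR (m-j)).
field. repeat split; auto. rewrite S_INR; lra.
Qed.

Lemma C_n0 n : Binomial.C n 0 = 1.
Proof. unfold Binomial.C. rewrite Nat.sub_0_r. replace (fact 0) with 1%nat by reflexivity.
simpl INR. field. apply INR_fact_neq_0. Qed.

Lemma term_deriv m j t : (j <= S m)%nat ->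
  is_derive (fun t => Binomial.C (S m) j * t^j * (1-t)^(S m - j)) t
    (INR (S m) * (bb m j t - bb m (S j) t)).
Proof.
intros Hj.
evar (d : R).
assert (H : is_derive (fun t => Binomial.C (S m) j * t^j * (1-t)^(S m - j)) t d).
{ auto_derive; [exact I|]. unfold d. reflexivity. }
eapply is_derive_ext; [intros; reflexivity|].
replace (INR (S m) * (bb m j t - bb m (S j) t)) with d; [exact H|].
unfold d; clear H d. unfold Rminus.
destruct j as [|j].
- simpl bb. unfold TT. rewrite Nat.sub_0_r. simpl pred.
  rewrite !C_n0.
  change (INR 0) with 0. simpl pow. unfold Rminus. ring.
- assert (Hjm : (j <= m)%nat) by lia.
  replace (bb m (S j) t) with (TT m j t) by (simpl; rewrite (proj2 (Nat.leb_le j m) Hjm); reflexivity).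
  unfold TT.
  replace (S m - S j)%nat with (m - j)%nat by lia.
  destruct (Nat.eq_dec j m) as [->|Hne].
  + replace (bb m (S (S m)) t) with 0.
    2:{ simpl. destruct m; [reflexivity|]. rewrite (proj2 (Nat.leb_gt (S m) m) ltac:(lia)). reflexivity. }
    rewrite Nat.sub_diag. simpl pred. change (INR 0) with 0.
    pose proof (C_id1 m m (Nat.le_refl m)).
    transitivity (INR (S m) * Binomial.C (S m) (S m) * t^m); [simpl; ring|].
    rewrite (Rmult_comm (INR (S m)) (Binomial.C (S m) (S m))), (Rmult_comm (Binomial.C (S m) (S m))), H. simpl; ring.
  + replace (bb m (S (S j)) t) with (TT m (S j) t).
    2:{ change (bb m (S (S j)) t) with (if Nat.leb (S j) m then TT m (S j) t else 0).
        rewrite (proj2 (Nat.leb_le (S j) m) ltac:(lia)). reflexivity. }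
    unfold TT.
    replace (m - j)%nat with (S (m - S j)) by lia. simpl pred.
    pose proof (C_id2 m (S j) ltac:(lia)) as H2.
    replace (S m - S j)%nat with (S (m - S j)) in H2 by lia.
    pose proof (C_id1 m j Hjm) as H1.
    transitivity (Binomial.C (S m) (S j) * INR (S j) * t^j * (1+-t)^(S (m - S j)) -
      (Binomial.C (S m) (S j) * INR (S (m - S j))) * (t * t^j) * (1+-t)^(m - S j)); [simpl; ring|].
    rewrite (Rmult_comm _ (INR (S (m - S j)))), H2. rewrite (Rmult_comm _ (INR (S j))), H1. unfold Rminus; simpl; ring.
Qed.

Lemma is_derive_sum (f : nat -> R -> R) (f' : nat -> R) t N :
  (forall j, (j <= N)%nat -> is_derive (f j) t (f' j)) ->
  is_derive (fun x => sum_f_R0 (fun j => f j x) N) t (sum_f_R0 f' N).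
Proof.
induction N; intros H.
- simpl. apply H. lia.
- simpl. apply (is_derive_plus (fun x => sum_f_R0 (fun j => f j x) N) (f (S N))).
  + apply IHN. intros; apply H; lia.
  + apply H; lia.
Qed.

Lemma tele m t c k N :
  sum_f_R0 (fun j => if Nat.leb k j then c * (bb m j t - bb m (S j) t) else 0) N =
  if Nat.leb k N then c * (bb m k t - bb m (S N) t) else 0.
Proof.
induction N.
- simpl. destruct k; simpl; [reflexivity|ring].
- rewrite tech5, IHN. cbv beta.
  destruct (Nat.leb k N) eqn:E1.
  + apply Nat.leb_le in E1. rewrite (proj2 (Nat.leb_le k (S N)) ltac:(lia)). ring.
  + apply Nat.leb_gt in E1. destruct (Nat.eq_dec k (S N)) as [->|Hn].
    * rewrite Nat.leb_refl. ring.
    * rewrite (proj2 (Nat.leb_gt k (S N)) ltac:(lia)). ring.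
Qed.

Lemma phi_sum_deriv m cc t : (cc <= m)%nat ->
  is_derive (fun t => sum_f_R0 (fun j => if Nat.leb (S cc) j
        then Binomial.C (S m) j * t ^ j * (1 - t) ^ (S m - j) else 0) (S m)) t
    (INR (S m) * TT m cc t).
Proof.
intros Hc.
pose (f := fun j (x : R) => if Nat.leb (S cc) j
        then Binomial.C (S m) j * x ^ j * (1 - x) ^ (S m - j) else 0).
pose (f' := fun j => if Nat.leb (S cc) j then INR (S m) * (bb m j t - bb m (S j) t) else 0).
replace (INR (S m) * TT m cc t) with (sum_f_R0 f' (S m)).
- apply (is_derive_sum f f' t (S m)). intros j Hj. unfold f, f'.
  destruct (Nat.leb (S cc) j).
  + apply term_deriv; auto.
  + apply (is_derive_const 0).
- unfold f'. rewrite tele. rewrite (proj2 (Nat.leb_le (S cc) (S m)) ltac:(lia)).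
  replace (bb m (S (S m)) t) with 0.
  2:{ simpl. destruct m; [reflexivity|]. rewrite (proj2 (Nat.leb_gt (S m) m) ltac:(lia)). reflexivity. }
  change (bb m (S cc) t) with (if Nat.leb cc m then TT m cc t else 0).
  rewrite (proj2 (Nat.leb_le cc m) Hc). ring.
Qed.

Definition ccn (n : nat) (g : R) : nat := Z.to_nat (Int_part ((INR n - 1) * g)).

Lemma cc_props m g : 0 <= g <= 1 ->
  phi_lo (S m) g = S (ccn (S m) g) /\ (ccn (S m) g <= m)%nat /\
  Rabs (INR (ccn (S m) g) - INR m * g) <= 1.
Proof.
intros Hg. unfold phi_lo, ccn.
replace (INR (S m) - 1) with (INR m) by (rewrite S_INR; ring).
set (x := INR m * g).
assert (Hx : 0 <= x <= INR m).
{ unfold x. pose proof (pos_INR m). split; [nra|nra]. }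
destruct (base_Int_part x) as [H1 H2].
set (z := Int_part x) in *.
assert (Hz0 : (0 <= z)%Z).
{ assert (-1 < IZR z) by lra. apply lt_IZR in H. lia. }
assert (Hzr : IZR z = INR (Z.to_nat z)).
{ rewrite INR_IZR_INZ. rewrite Z2Nat.id; auto. }
split; [|split].
- lia.
- apply INR_le. rewrite <- Hzr. lra.
- rewrite <- Hzr. apply Rabs_le. lra.
Qed.

Lemma phi_deriv m g t : 0 <= g <= 1 ->
  is_derive (phi (S m) g) t (INR (S m) * TT m (ccn (S m) g) t).
Proof.
intros Hg. destruct (cc_props m g Hg) as [E [Hc _]].
unfold phi. rewrite E. apply phi_sum_deriv; auto.
Qed.

Lemma mix_deriv p alpha gn m u :
  (forall i, (i <= p - 1)%nat -> 0 <= gn i (S m) <= 1) ->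
  Derive (phi_mix p alpha gn (S m)) u =
  sum_f_R0 (fun i => alpha i * (INR (S m) * TT m (ccn (S m) (gn i (S m))) u)) (p - 1).
Proof.
intros H. apply is_derive_unique. unfold phi_mix.
apply (is_derive_sum (fun i x => alpha i * phi (S m) (gn i (S m)) x)).
intros j Hj. apply is_derive_scal. apply phi_deriv. auto.
Qed.

Lemma C_pos m c : 0 < Binomial.C m c.
Proof.
unfold Binomial.C. apply Rdiv_lt_0_compat.
- apply lt_0_INR, lt_O_fact.
- apply Rmult_lt_0_compat; apply lt_0_INR, lt_O_fact.
Qed.

Lemma TT_pos m c u : 0 < u < 1 -> 0 < TT m c u.
Proof.
intros H. unfold TT. pose proof (C_pos m c).
apply Rmult_lt_0_compat; [apply Rmult_lt_0_compat|]; auto; apply pow_lt; lra.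
Qed.

Lemma TT_nonneg m c u : 0 <= u <= 1 -> 0 <= TT m c u.
Proof.
intros H. unfold TT. pose proof (C_pos m c).
apply Rmult_le_pos; [apply Rmult_le_pos|]; try lra; apply pow_le; lra.
Qed.

Lemma sum_nonneg_b f N : (forall i, (i <= N)%nat -> 0 <= f i) -> 0 <= sum_f_R0 f N.
Proof.
induction N; intros H; simpl.
- apply H; lia.
- pose proof (H (S N) (Nat.le_refl _)). assert (0 <= sum_f_R0 f N) by (apply IHN; intros; apply H; lia). lra.
Qed.

Lemma sum_ge_term f N c : (forall i, (i <= N)%nat -> 0 <= f i) -> (c <= N)%nat ->
  f c <= sum_f_R0 f N.
Proof.
induction N; intros H Hc.
- assert (c = 0%nat) by lia. subst. simpl. apply Rle_refl.
- rewrite tech5. destruct (Nat.eq_dec c (S N)) as [->|Hn].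
  + assert (0 <= sum_f_R0 f N).
    { apply sum_nonneg_b. intros; apply H; lia. }
    lra.
  + assert (f c <= sum_f_R0 f N) by (apply IHN; [intros; apply H; lia|lia]).
    pose proof (H (S N) (Nat.le_refl _)). lra.
Qed.

Lemma sum_TT m x : sum_f_R0 (fun c => TT m c x) m = 1.
Proof.
unfold TT. rewrite <- binomial. replace (x + (1 - x)) with 1 by ring. apply pow1.
Qed.

Lemma TT_le1 m c x : 0 <= x <= 1 -> (c <= m)%nat -> TT m c x <= 1.
Proof.
intros Hx Hc. rewrite <- (sum_TT m x).
apply (sum_ge_term (fun c => TT m c x)); auto.
intros; apply TT_nonneg; auto.
Qed.

Lemma TT_rec m c u : (c < m)%nat ->
  TT m (S c) u * (INR (S c) * (1 - u)) = TT m c u * (INR (m - c) * u).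
Proof.
intros H. unfold TT. rewrite pascal_step3 by auto.
replace (m - c)%nat with (S (m - S c)) at 2 by lia.
assert (INR (S c) <> 0) by (apply not_0_INR; lia).
simpl pow. field. auto.
Qed.

Lemma TT_mode m c : (c <= m)%nat -> (1 <= m)%nat ->
  1 <= INR (S m) * TT m c (INR c / INR m).
Proof.
intros Hc Hm.
assert (HmR : 0 < INR m) by (apply lt_0_INR; lia).
set (y := INR c / INR m).
destruct (Nat.eq_dec c 0) as [->|Hc0].
{ unfold TT, y. rewrite C_n0, Nat.sub_0_r. change (INR 0) with 0. unfold Rdiv.
  rewrite Rmult_0_l, Rminus_0_r, pow1, pow_O. rewrite S_INR. lra. }
destruct (Nat.eq_dec c m) as [->|Hcm].
{ unfold TT, y. rewrite Nat.sub_diag. unfold Rdiv. rewrite Rinv_r by lra. rewrite pow1.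
  replace (Binomial.C m m) with 1.
  2:{ unfold Binomial.C. rewrite Nat.sub_diag. simpl (fact 0). simpl INR. field. apply INR_fact_neq_0. }
  rewrite S_INR. simpl. lra. }
assert (Hy : 0 < y < 1).
{ unfold y. assert (0 < INR c) by (apply lt_0_INR; lia).
  assert (INR c < INR m) by (apply lt_INR; lia).
  split; [apply Rdiv_lt_0_compat; lra|]. apply (Rmult_lt_reg_r (INR m)); auto.
  unfold Rdiv. rewrite Rmult_assoc, Rinv_l by lra. lra. }
assert (Hyd : y * INR m = INR c) by (unfold y; field; lra).
assert (Dec : forall d, (c + d < m)%nat -> TT m (S (c + d)) y <= TT m (c + d) y).
{ intros d Hd. pose proof (TT_rec m (c + d) y Hd) as R.
  pose proof (TT_pos m (S (c+d)) y Hy). pose proof (TT_pos m (c+d) y Hy).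
  rewrite minus_INR in R by lia. rewrite S_INR, plus_INR in R.
  assert (Hin : (INR m - (INR c + INR d)) * y <= (INR c + INR d + 1) * (1 - y)).
  { rewrite <- Hyd. pose proof (pos_INR d). nra. }
  assert (0 < (INR c + INR d + 1) * (1 - y)) by (pose proof (pos_INR c); pose proof (pos_INR d); nra).
  nra. }
assert (Inc : forall d, (S d <= c)%nat -> TT m (c - S d) y <= TT m (c - d) y).
{ intros d Hd. pose proof (TT_rec m (c - S d) y ltac:(lia)) as R.
  replace (S (c - S d)) with (c - d)%nat in R by lia.
  pose proof (TT_pos m (c - d) y Hy). pose proof (TT_pos m (c - S d) y Hy).
  rewrite (minus_INR c d), (minus_INR m (c - S d)), (minus_INR c (S d)) in R by lia.
  assert (Hin : (INR c - INR d) * (1 - y) <= (INR m - (INR c - INR (S d))) * y).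
  { rewrite <- Hyd. rewrite S_INR. assert (INR (S d) <= INR c) by (apply le_INR; lia).
    rewrite S_INR in H1. pose proof (pos_INR d). nra. }
  rewrite S_INR in Hin.
  assert (0 < (INR m - (INR c - (INR d + 1))) * y).
  { apply Rmult_lt_0_compat; [|lra]. assert (INR c <= INR m) by (apply le_INR; lia).
    pose proof (pos_INR d). lra. }
  rewrite S_INR in R.
  apply (Rmult_le_reg_r ((INR m - (INR c - (INR d + 1))) * y)); auto.
  rewrite <- R. apply Rmult_le_compat_l; lra. }
assert (Up: forall d, (c + d <= m)%nat -> TT m (c+d) y <= TT m c y).
{ induction d; intros Hd; [rewrite Nat.add_0_r; lra|].
  rewrite Nat.add_succ_r. eapply Rle_trans; [apply Dec; lia | apply IHd; lia]. }
assert (Down: forall d, (d <= c)%nat -> TT m (c-d) y <= TT m c y).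
{ induction d; intros Hd; [rewrite Nat.sub_0_r; lra|].
  eapply Rle_trans; [apply Inc; lia| apply IHd; lia]. }
assert (All : forall c', (c' <= m)%nat -> TT m c' y <= TT m c y).
{ intros c' Hc'. destruct (le_lt_dec c c') as [Hle|Hlt].
  - replace c' with (c + (c' - c))%nat by lia. apply Up; lia.
  - replace c' with (c - (c - c'))%nat by lia. apply Down; lia. }
rewrite <- (sum_TT m y) at 1.
replace (INR (S m) * TT m c y) with (sum_f_R0 (fun _ => TT m c y) m) by (rewrite sum_cte; ring).
apply sum_Rle. intros; apply All; auto.
Qed.

Lemma exp_pow_INR w c : exp w ^ c = exp (INR c * w).
Proof.
induction c.
- simpl. rewrite Rmult_0_l, exp_0. reflexivity.
- simpl pow. rewrite IHc, S_INR, <- exp_plus. f_equal. ring.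
Qed.

Lemma pow_le_exp z c : 0 <= z -> z ^ c <= exp (INR c * (z - 1)).
Proof.
intros Hz. rewrite <- exp_pow_INR. apply pow_incr. split; auto.
pose proof (exp_ineq1_le (z - 1)). lra.
Qed.

Lemma Gbound u v m c : 0 <= u <= 1 -> 0 < v < 1 -> (c <= m)%nat ->
  u ^ c * (1 - u) ^ (m - c) <=
  v ^ c * (1 - v) ^ (m - c) * exp ((u - v) * (INR c - INR m * v) / (v * (1 - v))).
Proof.
intros Hu Hv Hc.
assert (E1 : u ^ c = v ^ c * (u / v) ^ c) by (rewrite <- Rpow_mult_distr; f_equal; field; lra).
assert (E2 : (1 - u) ^ (m - c) = (1 - v) ^ (m - c) * ((1 - u) / (1 - v)) ^ (m - c))
  by (rewrite <- Rpow_mult_distr; f_equal; field; lra).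
rewrite E1, E2.
assert (P1 : (u / v) ^ c <= exp (INR c * (u / v - 1)))
  by (apply pow_le_exp; apply Rdiv_le_0_compat; lra).
assert (P2 : ((1 - u) / (1 - v)) ^ (m - c) <= exp (INR (m - c) * ((1 - u) / (1 - v) - 1)))
  by (apply pow_le_exp; apply Rdiv_le_0_compat; lra).
assert (Ex : (u - v) * (INR c - INR m * v) / (v * (1 - v)) =
   INR c * (u / v - 1) + INR (m - c) * ((1 - u) / (1 - v) - 1)).
{ rewrite minus_INR by auto. field. lra. }
rewrite Ex, exp_plus.
assert (0 <= v ^ c) by (apply pow_le; lra).
assert (0 <= (1 - v) ^ (m - c)) by (apply pow_le; lra).
assert (0 <= (u / v) ^ c) by (apply pow_le; apply Rdiv_le_0_compat; lra).
assert (0 <= ((1 - u) / (1 - v)) ^ (m - c)) by (apply pow_le; apply Rdiv_le_0_compat; lra).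
transitivity (v ^ c * (1 - v) ^ (m - c) * ((u / v) ^ c * ((1 - u) / (1 - v)) ^ (m - c))); [right; ring|].
apply Rmult_le_compat_l; [apply Rmult_le_pos; auto|].
apply Rmult_le_compat; auto.
Qed.

Lemma TT_G u v m c : 0 <= u <= 1 -> 0 < v < 1 -> (c <= m)%nat ->
  TT m c u <= TT m c v * exp ((u - v) * (INR c - INR m * v) / (v * (1 - v))).
Proof.
intros Hu Hv Hc. unfold TT. pose proof (C_pos m c).
pose proof (Gbound u v m c Hu Hv Hc).
transitivity (Binomial.C m c * (u ^ c * (1 - u) ^ (m - c))); [right; ring|].
transitivity (Binomial.C m c * (v ^ c * (1 - v) ^ (m - c) * exp ((u - v) * (INR c - INR m * v) / (v * (1 - v))))); [|right; ring].
apply Rmult_le_compat_l; lra.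
Qed.

Lemma R_self m c a b : 0 < a < 1 -> 0 < b < 1 -> (c <= m)%nat ->
  TT m c a / TT m c b <= exp ((a - b) * (INR c - INR m * b) / (b * (1 - b))).
Proof.
intros Ha Hb Hc. pose proof (TT_pos m c b Hb).
apply (Rmult_le_reg_r (TT m c b)); auto. unfold Rdiv. rewrite Rmult_assoc, Rinv_l by lra.
rewrite Rmult_1_r, Rmult_comm. apply TT_G; auto; lra.
Qed.

Lemma R_cross m cj ci a b x : 0 < a < 1 -> 0 < b < 1 -> 0 < x < 1 ->
  (cj <= m)%nat -> (ci <= m)%nat -> (1 <= m)%nat ->
  TT m cj a / TT m ci b <=
  INR (S m) * exp ((a - x) * (INR cj - INR m * x) / (x * (1 - x)) +
                   (INR ci - INR m * b) ^ 2 / (INR m * (b * (1 - b)))).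
Proof.
intros Ha Hb Hx Hcj Hci Hm.
assert (HmR : 0 < INR m) by (apply lt_0_INR; lia).
pose proof (TT_pos m ci b Hb) as Pb.
pose proof (TT_G a x m cj ltac:(lra) Hx Hcj) as Ga.
pose proof (TT_le1 m cj x ltac:(lra) Hcj) as Lx.
set (y := INR ci / INR m).
assert (Hy : 0 <= y <= 1).
{ unfold y. assert (INR ci <= INR m) by (apply le_INR; auto). pose proof (pos_INR ci).
  split; [apply Rdiv_le_0_compat; lra|]. apply (Rmult_le_reg_r (INR m)); auto.
  unfold Rdiv. rewrite Rmult_assoc, Rinv_l by lra. lra. }
pose proof (TT_G y b m ci Hy Hb Hci) as Gy.
pose proof (TT_mode m ci Hci Hm) as Mo. fold y in Mo.
assert (Ey : (y - b) * (INR ci - INR m * b) / (b * (1 - b)) =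
             (INR ci - INR m * b) ^ 2 / (INR m * (b * (1 - b)))).
{ unfold y. field. split; lra. }
rewrite Ey in Gy.
set (E1 := (a - x) * (INR cj - INR m * x) / (x * (1 - x))) in *.
set (E2 := (INR ci - INR m * b) ^ 2 / (INR m * (b * (1 - b)))) in *.
pose proof (exp_pos E1). pose proof (exp_pos E2).
pose proof (TT_nonneg m cj x ltac:(lra)).
assert (HA : TT m cj a <= exp E1).
{ eapply Rle_trans; [apply Ga|]. rewrite <- (Rmult_1_l (exp E1)) at 2.
  apply Rmult_le_compat_r; lra. }
assert (HB : 1 <= INR (S m) * TT m ci b * exp E2).
{ eapply Rle_trans; [apply Mo|]. rewrite Rmult_assoc. apply Rmult_le_compat_l; [apply pos_INR|]. auto. }
rewrite exp_plus.
apply (Rmult_le_reg_r (TT m ci b)); auto. unfold Rdiv. rewrite Rmult_assoc, Rinv_l by lra.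
rewrite Rmult_1_r.
eapply Rle_trans; [apply HA|].
transitivity (exp E1 * (INR (S m) * TT m ci b * exp E2)); [|right; ring].
rewrite <- (Rmult_1_r (exp E1)) at 1. apply Rmult_le_compat_l; lra.
Qed.

Lemma lim_inv_n : is_lim_seq (fun n => / INR n) 0.
Proof.
pose proof (is_lim_seq_inv INR p_infty is_lim_seq_INR ltac:(discriminate)) as H.
simpl in H. exact H.
Qed.

Lemma lim_nexp kap K : 0 < kap -> is_lim_seq (fun n => INR n * exp (K - kap * INR n)) 0.
Proof.
intros Hk.
apply (is_lim_seq_le_le_loc (fun _ => 0) _ (fun n => (2 * exp K / kap ^ 2) * / INR n)).
- exists 1%nat. intros n Hn.
  assert (Hn' : 0 < INR n) by (apply lt_0_INR; lia).
  set (z := kap * INR n).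
  assert (Hz : 0 < z) by (unfold z; nra).
  assert (T : z ^ 2 / 2 <= exp z).
  { pose proof (exp_ge_taylor z 2 ltac:(lra)) as T. simpl in T.
    unfold Rdiv in *. simpl. nra. }
  assert (Ee : exp (K - z) = exp K / exp z).
  { unfold Rminus. rewrite exp_plus, exp_Ropp. reflexivity. }
  rewrite Ee. pose proof (exp_pos K). pose proof (exp_pos z).
  split.
  + apply Rmult_le_pos; [lra|]. apply Rdiv_le_0_compat; lra.
  + unfold z in *. apply (Rmult_le_reg_r (exp (kap * INR n) * (kap^2 * INR n))).
    { apply Rmult_lt_0_compat; auto. nra. }
    transitivity ((kap * INR n) ^ 2 * exp K); [right; field; repeat split; lra|].
    transitivity (2 * exp K * exp (kap * INR n)); [|right; field; repeat split; lra].
    apply (Rmult_le_compat_r (exp K)) in T; [|left; apply (exp_pos K)]. lra.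
- apply is_lim_seq_const.
- replace (Finite 0) with (Rbar_mult (2 * exp K / kap ^ 2) 0) by (simpl; f_equal; ring).
  apply is_lim_seq_scal_l. apply lim_inv_n.
Qed.

Lemma exp_le_mono x y : x <= y -> exp x <= exp y.
Proof. intros [H|H]; [left; apply exp_increasing; auto|right; subst; auto]. Qed.

Lemma self_lim (a b g K : R) (c : nat -> nat) :
  0 < a < 1 -> 0 < b < 1 -> 0 < (a - b) * (b - g) ->
  (forall n, (1 <= n)%nat -> (c n <= n - 1)%nat /\ Rabs (INR (c n) - INR (n - 1) * g) <= K) ->
  is_lim_seq (fun n => TT (n - 1) (c n) a / TT (n - 1) (c n) b) 0.
Proof.
intros Ha Hb Hab Hc.
set (q := / (b * (1 - b))).
assert (Hq : 0 < q) by (unfold q; apply Rinv_0_lt_compat; nra).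
set (kap := (a - b) * (b - g) * q).
assert (Hk : 0 < kap) by (unfold kap; nra).
apply (is_lim_seq_le_le_loc (fun _ => 0) _
   (fun n => INR n * exp ((Rabs (a - b) * K * q + kap) - kap * INR n))).
- exists 1%nat. intros n Hn. destruct (Hc n Hn) as [Hcn Hb2].
  pose proof (TT_pos (n-1) (c n) a Ha). pose proof (TT_pos (n-1) (c n) b Hb).
  split; [apply Rdiv_le_0_compat; lra|].
  eapply Rle_trans; [apply R_self; auto|].
  assert (Hn1 : 1 <= INR n) by (apply (le_INR 1); auto).
  assert (Em : INR (n - 1) = INR n - 1) by (rewrite minus_INR by auto; reflexivity).
  rewrite Em in *.
  set (e := INR (c n) - (INR n - 1) * g) in *.
  assert (Hexp : (a - b) * (INR (c n) - (INR n - 1) * b) / (b * (1 - b)) <=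
                 Rabs (a - b) * K * q + kap - kap * INR n).
  { replace ((a - b) * (INR (c n) - (INR n - 1) * b) / (b * (1 - b)))
      with ((a - b) * e * q - kap * (INR n - 1)) by (unfold e, kap, q; field; lra).
    assert ((a - b) * e <= Rabs (a - b) * K).
    { eapply Rle_trans; [apply Rle_abs|]. rewrite Rabs_mult.
      apply Rmult_le_compat_l; [apply Rabs_pos|]. auto. }
    nra. }
  apply exp_le_mono in Hexp. pose proof (exp_pos (Rabs (a - b) * K * q + kap - kap * INR n)).
  nra.
- apply is_lim_seq_const.
- apply lim_nexp; auto.
Qed.

Lemma cross_lim (a b gj gi Kj Ki : R) (cj ci : nat -> nat) :
  0 < a < 1 -> 0 < b < 1 -> 0 <= gj <= 1 -> 0 <= gi <= 1 ->
  0 < (a - gj) ^ 2 - (gi - b) ^ 2 / (b * (1 - b)) ->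
  (forall n, (1 <= n)%nat -> (cj n <= n - 1)%nat /\ Rabs (INR (cj n) - INR (n - 1) * gj) <= Kj) ->
  (forall n, (1 <= n)%nat -> (ci n <= n - 1)%nat /\ Rabs (INR (ci n) - INR (n - 1) * gi) <= Ki) ->
  is_lim_seq (fun n => TT (n - 1) (cj n) a / TT (n - 1) (ci n) b) 0.
Proof.
intros Ha Hb Hgj Hgi Hkap Hcj Hci.
set (x := (a + gj) / 2).
assert (Hx : 0 < x < 1) by (unfold x; lra).
set (qx := / (x * (1 - x))).
assert (Hqx : 4 <= qx).
{ unfold qx. replace 4 with (/ (1/4)) by field. pose proof (pow2_ge_0 (x - 1/2)). apply Rinv_le_contravar; nra. }
set (qb := / (b * (1 - b))).
assert (Hqb : 0 < qb) by (unfold qb; apply Rinv_0_lt_compat; nra).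
set (kap := (a - gj) ^ 2 - (gi - b) ^ 2 / (b * (1 - b))) in *.
assert (Kj0 : 0 <= Kj) by (destruct (Hcj 1%nat (le_n 1)) as [_ H]; pose proof (Rabs_pos (INR (cj 1%nat) - INR (1 - 1) * gj)); lra).
assert (Ki0 : 0 <= Ki) by (destruct (Hci 1%nat (le_n 1)) as [_ H]; pose proof (Rabs_pos (INR (ci 1%nat) - INR (1 - 1) * gi)); lra).
set (K' := Kj * qx + (2 * Ki + Ki ^ 2) * qb + kap).
apply (is_lim_seq_le_le_loc (fun _ => 0) _ (fun n => INR n * exp (K' - kap * INR n))).
- exists 2%nat. intros n Hn.
  destruct (Hcj n ltac:(lia)) as [Hcjn Bj]. destruct (Hci n ltac:(lia)) as [Hcin Bi].
  pose proof (TT_pos (n-1) (cj n) a Ha). pose proof (TT_pos (n-1) (ci n) b Hb).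
  split; [apply Rdiv_le_0_compat; lra|].
  eapply Rle_trans; [apply (R_cross (n-1) (cj n) (ci n) a b x); auto; lia|].
  replace (S (n - 1)) with n by lia.
  assert (Hn1 : 1 <= INR (n - 1)) by (apply (le_INR 1); lia).
  set (m := INR (n - 1)) in *.
  assert (Em : m = INR n - 1) by (unfold m; rewrite minus_INR by lia; reflexivity).
  set (ej := INR (cj n) - m * gj) in *.
  set (ei := INR (ci n) - m * gi) in *.
  assert (E1b : (a - x) * (INR (cj n) - m * x) / (x * (1 - x)) <= - m * (a - gj) ^ 2 + Kj * qx).
  { replace ((a - x) * (INR (cj n) - m * x) / (x * (1 - x)))
      with ((- m * (a - gj) ^ 2 / 4) * qx + (a - x) * ej * qx) by (unfold ej, qx, x; field; lra).
    assert (A1 : (a - x) * ej <= Kj).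
    { eapply Rle_trans; [apply Rle_abs|]. rewrite Rabs_mult.
      assert (Rabs (a - x) <= 1) by (apply Rabs_le; unfold x; lra).
      pose proof (Rabs_pos (a - x)). pose proof (Rabs_pos ej). nra. }
    assert (0 <= m * (a - gj) ^ 2) by (apply Rmult_le_pos; [lra| apply pow2_ge_0]).
    nra. }
  assert (E2b : (INR (ci n) - m * b) ^ 2 / (m * (b * (1 - b))) <=
                (m * (gi - b) ^ 2 + 2 * Ki + Ki ^ 2) * qb).
  { replace ((INR (ci n) - m * b) ^ 2 / (m * (b * (1 - b))))
      with ((m * (gi - b) + ei) ^ 2 / m * qb) by (unfold ei, qb; field; split; lra).
    apply Rmult_le_compat_r; [lra|].
    apply (Rmult_le_reg_r m); [lra|]. unfold Rdiv. rewrite Rmult_assoc, Rinv_l, Rmult_1_r by lra.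
    assert (Hei : - Ki <= ei <= Ki) by (unfold Rabs in Bi; destruct (Rcase_abs ei); lra).
    assert (Hgb : -1 <= gi - b <= 1) by lra.
    assert (P1 : (gi - b) * ei <= Ki) by nra.
    assert (P2 : ei ^ 2 <= Ki ^ 2) by nra.
    assert (P3 : m * ((gi - b) * ei) <= m * Ki) by (apply Rmult_le_compat_l; lra).
    assert (P4 : Ki ^ 2 <= Ki ^ 2 * m) by (pose proof (pow2_ge_0 Ki); nra).
    nra. }
  assert (Etot : - m * (a - gj) ^ 2 + Kj * qx + (m * (gi - b) ^ 2 + 2 * Ki + Ki ^ 2) * qb
                 = K' - kap * INR n).
  { unfold K', kap, qb. rewrite Em. unfold Rdiv. ring. }
  assert (Hexp : (a - x) * (INR (cj n) - m * x) / (x * (1 - x)) +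
                 (INR (ci n) - m * b) ^ 2 / (m * (b * (1 - b))) <= K' - kap * INR n) by lra.
  apply exp_le_mono in Hexp.
  apply Rmult_le_compat_l; [apply pos_INR|]. exact Hexp.
- apply is_lim_seq_const.
- apply lim_nexp; auto.
Qed.

Lemma lim_sum0 (f : nat -> nat -> R) N :
  (forall j, (j <= N)%nat -> is_lim_seq (f j) 0) ->
  is_lim_seq (fun n => sum_f_R0 (fun j => f j n) N) 0.
Proof.
induction N; intros H.
- simpl. apply H; lia.
- simpl. replace 0 with (0 + 0) by ring. apply is_lim_seq_plus'.
  + apply IHN. intros; apply H; lia.
  + apply H; lia.
Qed.

Lemma gap (p : nat) (gamma : nat -> R) i :
  (forall i j, (i < j < p)%nat -> gamma i < gamma j) -> (i < p)%nat ->
  exists d, 0 < d <= 1 /\ forall j, (j < p)%nat -> j <> i -> d <= Rabs (gamma j - gamma i).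
Proof.
intros Hm Hi.
assert (G : forall N, exists d, 0 < d <= 1 /\
   forall j, (j < N)%nat -> (j < p)%nat -> j <> i -> d <= Rabs (gamma j - gamma i)).
{ induction N.
  - exists 1. split; [lra|]. intros; lia.
  - destruct IHN as [d [Hd H]].
    destruct (lt_dec N p) as [HN|HN]; [destruct (Nat.eq_dec N i) as [HNi|HNi]|].
    + exists d. split; auto. intros j Hj Hjp Hji. apply H; auto. lia.
    + assert (Hne : 0 < Rabs (gamma N - gamma i)).
      { apply Rabs_pos_lt. destruct (lt_dec N i).
        - pose proof (Hm N i ltac:(lia)). lra.
        - pose proof (Hm i N ltac:(lia)). lra. }
      exists (Rmin d (Rabs (gamma N - gamma i))). split.
      * split; [apply Rmin_glb_lt; lra|]. pose proof (Rmin_l d (Rabs (gamma N - gamma i))). lra.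
      * intros j Hj Hjp Hji. destruct (Nat.eq_dec j N) as [->|HjN].
        -- apply Rmin_r.
        -- eapply Rle_trans; [apply Rmin_l|]. apply H; auto; lia.
    + exists d. split; auto. intros j Hj Hjp Hji. apply H; auto. lia. }
destruct (G p) as [d [Hd H]]. exists d. split; auto.
Qed.

Lemma c_bounds (gamma : nat -> R) (gn : nat -> nat -> R) j :
  (forall n, 0 <= gn j n <= 1) ->
  (exists C, forall n, (0 < n)%nat -> Rabs (gn j n - gamma j) <= C / INR n) ->
  exists K, forall n, (1 <= n)%nat ->
    (ccn n (gn j n) <= n - 1)%nat /\ Rabs (INR (ccn n (gn j n)) - INR (n - 1) * gamma j) <= K.
Proof.
intros Hg [C HC].
assert (C0 : 0 <= C).
{ pose proof (HC 1%nat ltac:(lia)). simpl INR in H. pose proof (Rabs_pos (gn j 1%nat - gamma j)). lra. }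
exists (1 + C). intros n Hn.
destruct n as [|m]; [lia|].
destruct (cc_props m (gn j (S m)) (Hg (S m))) as [_ [Hc Ha]].
replace (S m - 1)%nat with m by lia. split; auto.
pose proof (HC (S m) ltac:(lia)) as Hb.
assert (HS : 0 < INR (S m)) by (apply lt_0_INR; lia).
assert (Hmm : INR m <= INR (S m)) by (apply le_INR; lia).
assert (H2 : Rabs (INR m * (gn j (S m) - gamma j)) <= C).
{ rewrite Rabs_mult, Rabs_right by (apply Rle_ge, pos_INR).
  pose proof (pos_INR m). pose proof (Rabs_pos (gn j (S m) - gamma j)).
  apply (Rmult_le_compat_l (INR m)) in Hb; auto.
  eapply Rle_trans; [apply Hb|]. unfold Rdiv.
  apply (Rmult_le_reg_r (INR (S m))); auto.
  replace (INR m * (C * / INR (S m)) * INR (S m)) with (INR m * C) by (field; lra). nra. }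
replace (INR (ccn (S m) (gn j (S m))) - INR m * gamma j) with
  ((INR (ccn (S m) (gn j (S m))) - INR m * gn j (S m)) + INR m * (gn j (S m) - gamma j)) by ring.
eapply Rle_trans; [apply Rabs_triang|]. lra.
Qed.

Theorem proposition5p2 (p : nat) (gamma alpha : nat -> R) (gn : nat -> nat -> R) :
  (0 < p)%nat ->
  (forall i, (i < p)%nat -> 0 <= gamma i <= 1) ->
  (forall i j, (i < j < p)%nat -> gamma i < gamma j) ->
  (forall i, (i < p)%nat -> 0 < alpha i < 1) ->
  sum_f_R0 alpha (p - 1) = 1 ->
  (forall i n, (i < p)%nat -> 0 <= gn i n <= 1) ->
  (forall i, (i < p)%nat -> exists C, forall n, (0 < n)%nat ->
       Rabs (gn i n - gamma i) <= C / INR n) ->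
  forall i, (i < p)%nat ->
    exists delta, 0 < delta /\
      forall a b, 0 < a < 1 -> 0 < b < 1 ->
        ((gamma i - delta < a /\ a < b /\ b < gamma i) \/
         (gamma i < b /\ b < a /\ a < gamma i + delta)) ->
        is_lim_seq (fun n => Derive (phi_mix p alpha gn n) a /
                             Derive (phi_mix p alpha gn n) b) 0.
Proof.
intros Hp Hg Hmono Hal Hsum Hgn HC i Hi.
destruct (gap p gamma i Hmono Hi) as [d [Hd Hgap]].
set (gi := gamma i).
assert (Hgi : 0 <= gi <= 1) by (apply Hg; auto).
assert (EL : exists eL, 0 < eL /\ (0 < gi -> eL <= gi * d ^ 2 / 16)).
{ destruct (Rlt_dec 0 gi) as [H|H].
  - exists (gi * d ^ 2 / 16). split; [|intros; lra]. pose proof (pow_lt d 2 (proj1 Hd)). nra.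
  - exists 1. split; [lra|]. intros; lra. }
assert (ER : exists eR, 0 < eR /\ (gi < 1 -> eR <= (1 - gi) * d ^ 2 / 16)).
{ destruct (Rlt_dec gi 1) as [H|H].
  - exists ((1 - gi) * d ^ 2 / 16). split; [|intros; lra]. pose proof (pow_lt d 2 (proj1 Hd)). nra.
  - exists 1. split; [lra|]. intros; lra. }
destruct EL as [eL [HeL HeL']]. destruct ER as [eR [HeR HeR']].
set (delta := Rmin (d / 2) (Rmin eL eR)).
assert (Hdl1 : delta <= d / 2) by apply Rmin_l.
assert (Hdl2 : delta <= eL) by (eapply Rle_trans; [apply Rmin_r|apply Rmin_l]).
assert (Hdl3 : delta <= eR) by (eapply Rle_trans; [apply Rmin_r|apply Rmin_r]).
exists delta. split.
{ apply Rmin_glb_lt; [lra|apply Rmin_glb_lt; lra]. }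
intros a b Ha Hb Hcase.
set (c := fun j n => ccn n (gn j n)).
assert (Hcb : forall j, (j < p)%nat -> exists K, forall n, (1 <= n)%nat ->
    (c j n <= n - 1)%nat /\ Rabs (INR (c j n) - INR (n - 1) * gamma j) <= K).
{ intros j Hj. apply c_bounds; auto. }
assert (Hai : 0 < alpha i) by (apply Hal; auto).
assert (Rj : forall j, (j <= p - 1)%nat -> is_lim_seq
   (fun n => alpha j / alpha i * (TT (n - 1) (c j n) a / TT (n - 1) (c i n) b)) 0).
{ intros j Hj.
  replace (Finite 0) with (Rbar_mult (alpha j / alpha i) 0) by (simpl; f_equal; ring).
  apply is_lim_seq_scal_l.
  destruct (Hcb i Hi) as [Ki HKi].
  destruct (Nat.eq_dec j i) as [->|Hji].
  - apply (self_lim a b gi Ki); auto. fold gi in HKi.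
    destruct Hcase as [[H1 [H2 H3]]|[H1 [H2 H3]]]; nra.
  - destruct (Hcb j ltac:(lia)) as [Kj HKj].
    apply (cross_lim a b (gamma j) gi Kj Ki); auto.
    + apply Hg; lia.
    + pose proof (Hgap j ltac:(lia) Hji) as Hgj. fold gi in Hgj.
      assert (Hd2 : 0 < d ^ 2 <= 1) by (split; [apply pow_lt; lra|]; nra).
      assert (Hag : Rabs (a - gi) < delta) by (apply Rabs_def1; destruct Hcase; lra).
      assert (A1 : d ^ 2 / 4 <= (a - gamma j) ^ 2).
      { apply Rabs_def2 in Hag. unfold Rabs in Hgj. destruct (Rcase_abs (gamma j - gi)).
        - assert (d / 2 <= a - gamma j) by lra. nra.
        - assert (d / 2 <= gamma j - a) by lra. nra. }
      assert (A2 : (gi - b) ^ 2 <= d ^ 2 / 8 * (b * (1 - b))).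
      { destruct Hcase as [[H1 [H2 H3]]|[H1 [H2 H3]]].
        - assert (Hgi0 : 0 < gi) by lra. pose proof (HeL' Hgi0) as HL.
          assert (T1 : gi - b <= gi * d ^ 2 / 16) by lra.
          assert (T2 : gi <= 2 * b) by nra.
          assert (T3 : gi - b <= b * d ^ 2 / 8) by nra.
          assert (T4 : (gi - b) ^ 2 <= (gi - b) * (1 - b)) by nra.
          assert (T5 : (gi - b) * (1 - b) <= b * d ^ 2 / 8 * (1 - b)) by (apply Rmult_le_compat_r; lra).
          lra.
        - assert (Hgi1 : gi < 1) by lra. pose proof (HeR' Hgi1) as HR.
          assert (T1 : b - gi <= (1 - gi) * d ^ 2 / 16) by lra.
          assert (T2 : 1 - gi <= 2 * (1 - b)) by nra.
          assert (T3 : b - gi <= (1 - b) * d ^ 2 / 8) by nra.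
          assert (T4 : (gi - b) ^ 2 <= (b - gi) * b) by nra.
          assert (T5 : (b - gi) * b <= (1 - b) * d ^ 2 / 8 * b) by (apply Rmult_le_compat_r; lra).
          lra. }
      assert (A3 : (gi - b) ^ 2 / (b * (1 - b)) <= d ^ 2 / 8).
      { assert (0 < b * (1 - b)) by nra.
        apply (Rmult_le_reg_r (b * (1 - b))); auto. unfold Rdiv at 1.
        rewrite Rmult_assoc, Rinv_l, Rmult_1_r by lra. lra. }
      lra. }
apply (is_lim_seq_le_le_loc (fun _ => 0) _ (fun n => sum_f_R0 (fun j => alpha j / alpha i *
   (TT (n - 1) (c j n) a / TT (n - 1) (c i n) b)) (p - 1))).
2: apply is_lim_seq_const.
2: apply (lim_sum0 (fun j n => alpha j / alpha i * (TT (n - 1) (c j n) a / TT (n - 1) (c i n) b))); exact Rj.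
exists 1%nat. intros n Hn. destruct n as [|m]; [lia|].
rewrite !mix_deriv by (intros; apply Hgn; lia).
replace (S m - 1)%nat with m by lia.
change (ccn (S m) (gn ?j (S m))) with (c j (S m)).
set (Sa := sum_f_R0 (fun j => alpha j * (INR (S m) * TT m (c j (S m)) a)) (p - 1)).
set (Sb := sum_f_R0 (fun j => alpha j * (INR (S m) * TT m (c j (S m)) b)) (p - 1)).
set (Tb := TT m (c i (S m)) b).
assert (HTb : 0 < Tb) by (apply TT_pos; auto).
assert (HSm : 0 < INR (S m)) by (apply lt_0_INR; lia).
assert (Hden : 0 < alpha i * (INR (S m) * Tb)) by (apply Rmult_lt_0_compat; auto; apply Rmult_lt_0_compat; auto).
assert (HSb : alpha i * (INR (S m) * Tb) <= Sb).
{ unfold Sb, Tb. apply (sum_ge_term (fun j => alpha j * (INR (S m) * TT m (c j (S m)) b))); [|lia].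
  intros j Hj. apply Rmult_le_pos; [left; apply Hal; lia|]. apply Rmult_le_pos; [lra|].
  apply TT_nonneg; lra. }
assert (HSa : 0 <= Sa).
{ unfold Sa. apply sum_nonneg_b. intros j Hj. apply Rmult_le_pos; [left; apply Hal; lia|].
  apply Rmult_le_pos; [lra|]. apply TT_nonneg; lra. }
assert (Eq : sum_f_R0 (fun j => alpha j / alpha i * (TT m (c j (S m)) a / Tb)) (p - 1) =
             Sa / (alpha i * (INR (S m) * Tb))).
{ unfold Sa, Rdiv at 3. rewrite Rmult_comm, scal_sum. apply sum_eq. intros j Hj.
  field. repeat split; lra. }
rewrite Eq. split.
- apply Rdiv_le_0_compat; lra.
- unfold Rdiv. apply Rmult_le_compat_l; auto. apply Rinv_le_contravar; auto.
Qed.
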